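(* Let $q$ be a prime power, let $\mathcal{F}$ be a flag on $\mathbb{F}_{q^n}$ whose best friend is the subfield $\mathbb{F}_{q^m}$, and let $\beta\in\mathbb{F}_{q^n}^*$. Then $|\mathrm{Orb}_\beta(\mathcal{F})|=|\beta|$ if and only if $|\beta|$ and $q^m-1$ are coprime. In particular, this equality always holds if $q=2$ and $m=1$.
   Context: A flag on $\mathbb{F}_{q^n}$ is a sequence $(\mathcal{F}_1,\ldots,\mathcal{F}_r)$ of $\mathbb{F}_q$-subspaces with $\{0\}\subsetneq\mathcal{F}_1\subsetneq\cdots\subsetneq\mathcal{F}_r\subsetneq\mathbb{F}_{q^n}$. For $\beta\in\mathbb{F}_{q^n}^*$ of multiplicative order $|\beta|$, $\mathcal{F}\beta=(\mathcal{F}_1\beta,\ldots,\mathcal{F}_r\beta)$ with $\mathcal{U}\beta=\{u\beta:u\in\mathcal{U}\}$, and $\mathrm{Orb}_\beta(\mathcal{F})=\{\mathcal{F}\beta^j:0\le j\le|\beta|-1\}$. A subfield $\mathbb{F}_{q^m}$ is a friend of $\mathcal{F}$ if every $\mathcal{F}_i$ is an $\mathbb{F}_{q^m}$-vector space; the best friend is the largest friend. *)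

(* Defs.v *)
From HB Require Import structures.
From mathcomp Require Import all_boot all_order all_algebra all_fingroup all_field.
Set Implicit Arguments. Unset Strict Implicit. Unset Printing Implicit Defensive.
Import GRing.Theory.
Local Open Scope ring_scope.

(* Setting: F = F_q a finite field, L = F_{q^n} a finite-dimensional field
   extension of F.  F_q-subspaces of L are the elements of {vspace L}. *)

Section FlagDefs.
Variables (F : finFieldType) (L : fieldExtType F).

Definition is_flag (fl : seq {vspace L}) : bool :=
  [&& sorted (fun U V : {vspace L} => (U <= V)%VS && (U != V)) fl,
      all (fun U : {vspace L} => U != 0%VS) fl &
      all (fun U : {vspace L} => U != fullv) fl].

Definition vs_mul (U : {vspace L}) (b : L) : {vspace L} := (U * <[b]>)%VS.

Definition flag_mul (fl : seq {vspace L}) (b : L) : seq {vspace L} :=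
  map (fun U => vs_mul U b) fl.

Definition friend (fl : seq {vspace L}) (K : {subfield L}) : Prop :=
  forall U, U \in fl -> forall k u, k \in K -> u \in U -> k * u \in U.

Definition best_friend (fl : seq {vspace L}) (K : {subfield L}) : Prop :=
  friend fl K /\ forall K' : {subfield L}, friend fl K' -> (K' <= K)%VS.

End FlagDefs.

Definition orbit_flag (F : finFieldType) (L : fieldExtType F)
    (fl : seq {vspace L}) (b : {unit (finvect_type L)}) : seq (seq {vspace L}) :=
  undup [seq flag_mul fl (FinRing.uval b ^+ j : L) | j <- iota 0 #[b]%g].

(* Main.v *)
Require Import Defs.
From HB Require Import structures.
From mathcomp Require Import all_boot all_order all_algebra all_fingroup all_field.
Set Implicit Arguments. Unset Strict Implicit. Unset Printing Implicit Defensive.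
Import GRing.Theory.

Section Aux.
Variables (F : finFieldType) (L : fieldExtType F).
Local Open Scope ring_scope.

Lemma flag_mulM (fl : seq {vspace L}) (a c : L) :
  flag_mul (flag_mul fl a) c = flag_mul fl (a * c).
Proof.
rewrite /flag_mul -map_comp; apply: eq_map => U /=.
by rewrite /vs_mul -prodvA prodv_line.
Qed.

Lemma flag_mul1 (fl : seq {vspace L}) : flag_mul fl 1 = fl.
Proof. by rewrite /flag_mul map_id_in // => U _; rewrite /vs_mul prodv1. Qed.

Lemma map_fix_in (T : eqType) (f : T -> T) (s : seq T) :
  map f s = s -> {in s, forall x, f x = x}.
Proof.
elim: s => //= x s IH [fx ms] y; rewrite in_cons => /orP[/eqP -> //|ys].
exact: IH.
Qed.

Lemma stab_best (fl : seq {vspace L}) (K : {subfield L}) (g : L) :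
  best_friend fl K -> g != 0 -> (flag_mul fl g = fl <-> g \in K).
Proof.
move=> [fK bK] nz; split=> [H|gK].
  have HU := map_fix_in H.
  have gU : forall U, U \in fl -> forall u, u \in U -> g * u \in U.
    move=> U Ufl u uU; have /= e := HU U Ufl; rewrite -e /vs_mul mulrC.
    by apply: memv_mul => //; apply: memv_line.
  have gUi : forall U, U \in fl -> forall i u, u \in U -> g ^+ i * u \in U.
    move=> U Ufl; elim=> [|i IHi] u uU; first by rewrite expr0 mul1r.
    by rewrite exprSr -mulrA; apply: IHi; apply: gU.
  have fr : friend fl <<1%AS; g>>%AS.
    move=> U Ufl k u /Fadjoin_polyP [p /polyOverP pK ->] uU.
    rewrite horner_coef mulr_suml; apply: memv_suml => i _.
    have /vlineP [c ->] := pK i.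
    by rewrite -mulrA -scalerAl mul1r memvZ // gUi.
  have := bK _ fr; move/subvP; apply; exact: memv_adjoin.
rewrite /flag_mul map_id_in // => U Ufl /=.
apply/eqP; rewrite eqEdim dim_cosetv // leqnn andbT.
apply/prodvP => u v uU /vlineP [c ->].
by rewrite mulrC; apply: fK => //; rewrite memvZ.
Qed.

End Aux.

Lemma nt_lemma (N M : nat) : 0 < N ->
  (forall k, 0 < k < N -> ~~ (N %| k * M)) <-> coprime N M.
Proof.
move=> N0; split=> [H|cNM k /andP [k0 kN]]; last first.
  rewrite Gauss_dvdl //; apply/negP => /(dvdn_leq k0); by rewrite leqNgt kN.
apply/negPn/negP => ncop.
set g := gcdn N M.
have g0 : 0 < g by rewrite gcdn_gt0 N0.
have g1 : 1 < g by rewrite ltn_neqAle eq_sym ncop g0.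
have gN : g %| N := dvdn_gcdl N M.
have gM : g %| M := dvdn_gcdr N M.
have k0 : 0 < N %/ g by rewrite divn_gt0 // dvdn_leq.
have kN : N %/ g < N by rewrite ltn_Pdiv.
have := H _ (introT andP (conj k0 kN)); apply/negP/negPn.
by rewrite -{1}(divnK gN) dvdn_pmul2l.
Qed.

Theorem corollary4p3 (F : finFieldType) (L : fieldExtType F)
    (fl : seq {vspace L}) (K : {subfield L}) (b : {unit (finvect_type L)}) :
  is_flag fl -> best_friend fl K ->
  ((size (orbit_flag fl b) = #[b]%g) <-> coprime #[b]%g (#|F| ^ \dim K).-1) /\
  (#|F| = 2 -> \dim K = 1 -> size (orbit_flag fl b) = #[b]%g).
Proof.
move=> _ bf.
set N := #[b]%g.
set beta : L := FinRing.uval b.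
have N0 : 0 < N := order_gt0 b.
have bnz : (beta != 0)%R.
  by have := valP b; rewrite /beta unitfE.
set Q := (#|F| ^ \dim K)%N.
have Q0 : 0 < Q by rewrite expn_gt0; apply/orP; left; apply/card_gt0P; exists 0%R.
have keyK k : (beta ^+ k \in K)%R = (N %| k * Q.-1).
  rewrite Fermat's_little_theorem -/Q -{1}(prednK Q0) exprS.
  rewrite -{3}[(beta ^+ k)%R]mulr1 (inj_eq (mulfI (expf_neq0 _ bnz))) -exprM.
  by rewrite cyclic.order_dvdn -(inj_eq val_inj) FinRing.val_unitX.
have keyS k : (flag_mul fl (beta ^+ k)%R = fl) <-> (N %| k * Q.-1).
  by rewrite -keyK; apply: stab_best => //; apply: expf_neq0.
have main : (size (orbit_flag fl b) = N) <-> coprime N Q.-1.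
set f := fun j => flag_mul fl (beta ^+ j)%R.
have -> : orbit_flag fl b = undup (map f (iota 0 N)) by [].
have sz : size (map f (iota 0 N)) = N by rewrite size_map size_iota.
have E1 : (size (undup (map f (iota 0 N))) = N) <-> uniq (map f (iota 0 N)).
  split=> [H|H]; last by rewrite undup_id.
  apply: (@leq_size_uniq _ (undup (map f (iota 0 N)))).
  - exact: undup_uniq.
  - by move=> x; rewrite mem_undup.
  - by rewrite H sz.
apply: (iff_trans E1); apply: (iff_trans _ (nt_lemma _ N0)); split=> [U k /andP [k0 kN]|H].
  apply/negP => /keyS fk.
  move: U; rewrite -(prednK N0) /= => /andP [nin _]; case/negP: nin.
  have -> : f 0 = fl by rewrite /f expr0 flag_mul1.
  rewrite -fk; apply: (map_f f); rewrite mem_iota k0 /= add1n prednK //.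
rewrite map_inj_in_uniq ?iota_uniq //.
have W : forall i j, i <= j -> j < N -> f i = f j -> i = j.
  move=> i j ij jN fij; apply/eqP; rewrite eqn_leq ij /= leqNgt; apply/negP => lt.
  have := H (j - i); rewrite subn_gt0 lt /= (leq_ltn_trans (leq_subr _ _) jN) => /(_ isT).
  case/negP; apply/keyS.
  have := congr1 (fun X => flag_mul X ((beta ^+ i)^-1)%R) fij; rewrite /f /= !flag_mulM.
  rewrite mulfV ?expf_neq0 // flag_mul1 => E.
  rewrite [RHS]E; congr flag_mul.
  by rewrite -[in RHS](subnK (ltnW lt)) exprD mulfK ?expf_neq0.
move=> i j; rewrite !mem_iota /= !add0n => iN jN fij.
case: (leqP i j) => ij; first exact: W.
by apply/esym/W => //; apply: ltnW.
split=> // F2 K1; apply/main; rewrite /Q F2 K1; exact: coprimen1.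
Qed.
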